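(* Let $G$ be a nonempty finite graph on $v$ vertices with $e$ edges, and let $s\ge2$ be an integer. (i) If $e>8D^2v^{1+1/s}$ for some $D>9\pi s/4$, then there exist two vertices $v_0,v_s$ such that $G$ contains more than $D^{2s}/4$ pairwise distinct trails of length $s$ from $v_0$ to $v_s$. (ii) The same conclusion holds if $G$ is bipartite with vertex classes of sizes $m$ and $n$ and $e>4D^2\min(m,n)^{1/s}\max(m,n)$ for some $D>9\pi s/4$.
   Context: A trail of length $s$ from $v_0$ to $v_s$ in a graph is a sequence $(v_0,\dots,v_s)$ of vertices such that $\{v_0,v_1\},\dots,\{v_{s-1},v_s\}$ are pairwise distinct edges of the graph (vertices may repeat). *)

(* Defs.v *)
From Stdlib Require Import Reals.
From mathcomp Require Import all_boot.

Set Implicit Arguments.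
Unset Strict Implicit.
Unset Printing Implicit Defensive.

Section Graphs.
Variable T : finType.

Definition simple_graph (g : rel T) : Prop := symmetric g /\ irreflexive g.

Definition edge_set (g : rel T) : {set {set T}} :=
  [set E : {set T} | [exists x, exists y, g x y && (E == [set x; y])]].

Definition num_edges (g : rel T) : nat := #|edge_set g|.

Definition is_trail (g : rel T) (p : seq T) : bool :=
  if p is x :: q then path g x q && uniq (pairmap (fun a b => [set a; b]) x q)
  else false.

(* Number of trails of length s (i.e. sequences (v_0,...,v_s)) from x to y. *)
Definition num_trails (g : rel T) (s : nat) (x y : T) : nat :=
  #|[set t : (s.+1).-tuple T | [&& is_trail g t, tnth t ord0 == x
                                  & tnth t ord_max == y]]|.

Definition bipartition (g : rel T) (A : {set T}) : Prop :=
  forall x y, g x y -> (x \in A) != (y \in A).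

End Graphs.

(* Main.v *)
Require Import Defs.
From Stdlib Require Import Reals.
From mathcomp Require Import all_boot zify.
From Stdlib Require Import Lia Lra Psatz Classical.

Section Comb.
Variables (T : finType) (g : rel T).
Hypothesis gsym : symmetric g.
Hypothesis girr : irreflexive g.

Definition deg (S : {set T}) u := #|[set w in S | g u w]|.
Definition Psum (S : {set T}) := \sum_(x in S) deg S x.

Lemma degD1 (S : {set T}) (u x : T) : x != u -> deg S x = deg (S :\ u) x + (g x u && (u \in S)).
Proof.
move=> xu; rewrite /deg (cardsD1 u [set w in S | g x w]) inE addnC.
congr (_ + _); last by rewrite andbC.
apply: eq_card => w; rewrite !inE; by case: (w == u).
Qed.

Lemma P_D1 (S : {set T}) (u : T) : u \in S -> Psum S = Psum (S :\ u) + 2 * deg S u.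
Proof.
move=> uS; rewrite /Psum (big_setD1 _ uS) /=.
rewrite (eq_bigr (fun x => deg (S:\u) x + (g x u))); last first.
  by move=> x; rewrite !inE => /andP[xu xS]; rewrite (@degD1 S u x xu) uS andbT.
rewrite big_split /=.
have -> : \sum_(i in S :\ u) (g i u : nat) = deg S u.
  rewrite /deg -sum1_card big_mkcond /= [RHS]big_mkcond /=.
  apply: eq_bigr => x _; rewrite !inE.
  case: (eqVneq x u) => [->|xu] /=; first by rewrite girr andbF.
  by rewrite gsym; case: (x \in S); case: (g u x).
lia.
Qed.

Lemma edges_le : num_edges g <= Psum setT.
Proof.
rewrite /num_edges.
have sub : edge_set g \subset [set [set p.1; p.2] | p in [set p : T * T | g p.1 p.2]].
  apply/subsetP => E; rewrite inE => /existsP[x /existsP[y /andP[gxy /eqP ->]]].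
  by apply/imsetP; exists (x, y); rewrite ?inE.
apply: (leq_trans (subset_leq_card sub)); apply: (leq_trans (leq_imset_card _ _)).
rewrite /Psum /deg.
have -> : #|[set p : T * T | g p.1 p.2]| = \sum_(p : T * T) (g p.1 p.2 : nat).
  rewrite -sum1_card big_mkcond /=; apply: eq_bigr => p _; rewrite inE.
  by case: (g p.1 p.2).
rewrite -(pair_big predT predT (fun i j => (g i j : nat))) /=.
apply: eq_leq; apply: eq_big => [x|x _]; first by rewrite inE.
rewrite -sum1_card [RHS]big_mkcond /=.
by apply: eq_bigr => y _; rewrite !inE; case: (g x y).
Qed.


Fixpoint ext (S : {set T}) (n : nat) (x : T) (V : seq T) : seq (seq T) :=
  if n is n'.+1 then
    [seq y :: q | y <- enum [pred y | (y \in S) && g x y && (y \notin V)],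
                  q <- ext S n' y (y :: V)]
  else [:: [::]].

Lemma sumn_ge (l : seq T) (f : T -> nat) m :
  (forall y, y \in l -> m <= f y) -> size l * m <= sumn [seq f y | y <- l].
Proof.
elim: l => //= a l IH H; rewrite mulSn; apply: leq_add; first by apply: H; rewrite inE eqxx.
by apply: IH => y yl; apply: H; rewrite inE yl orbT.
Qed.

Lemma ext_size (S : {set T}) d :
  (forall u, u \in S -> d <= deg S u) ->
  forall n x V, x \in S -> (d - (size V + n)) ^ n <= size (ext S n x V).
Proof.
move=> Hd; elim=> [|n IH] x V xS //=.
rewrite size_allpairs_dep.
set N := [pred y | (y \in S) && g x y && (y \notin V)].
have cN : d - size V <= size (enum N).
  rewrite -cardE.
  have : deg S x <= #|N| + size V.
    rewrite /deg.
    apply: (leq_trans (n := #|[predU N & [pred y | y \in V]]|)).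
      apply: subset_leq_card; apply/subsetP => y; rewrite !inE => /andP[yS gxy].
      by rewrite yS gxy /=; case: (y \in V).
    rewrite -(leq_add2r #|[predI N & [pred y | y \in V]]|) cardUI.
    rewrite -addnA leq_add2l.
    apply: leq_trans (leq_addr _ _).
    have -> : #|[pred y | y \in V]| = #|V| by apply: eq_card.
    by apply: card_size.
  move: (Hd x xS); rewrite /deg => h1 h2; rewrite leq_subLR addnC; exact: leq_trans h1 h2.
rewrite expnS.
apply: (leq_trans (n := size (enum N) * (d - (size V + n.+1)) ^ n)).
  apply: leq_mul; first by apply: (leq_trans _ cN); lia.
  by [].
apply: sumn_ge => y; rewrite mem_enum => /andP[/andP[yS _] _].
have := IH y (y :: V) yS; rewrite /= addSn -addnS //.
Qed.

Lemma ext_uniq (S : {set T}) n x V : uniq (ext S n x V).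
Proof.
elim: n x V => [|n IH] x V //=.
apply: allpairs_uniq_dep => //; first by apply: enum_uniq.
by move=> [a q] [b r] _ _ /= [-> ->].
Qed.

Lemma ext_mem (S : {set T}) n x V q : q \in ext S n x V ->
  [/\ size q = n, path g x q, uniq q & all (fun y => y \notin V) q].
Proof.
elim: n x V q => [|n IH] x V q /=; first by rewrite inE => /eqP ->.
case/allpairsPdep => [y [r [yN rext ->]]].
move: yN; rewrite mem_enum => /andP[/andP[yS gxy] yV].
case: (IH _ _ _ rext) => sr pr ur ar.
split => //=; first by rewrite sr.
  by rewrite gxy.
  rewrite ur andbT; apply/negP => yr; move/allP: ar => /(_ y yr); by rewrite inE eqxx.
rewrite yV /=; apply/allP => z zr; move/allP: ar => /(_ z zr); rewrite inE negb_or.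
by case/andP.
Qed.

Lemma pairmap_sub (x : T) (q : seq T) (z : {set T}) (w : T) : z \in pairmap (fun a b => [set a; b]) x q -> w \in z -> w \in x :: q.
Proof.
elim: q x z => [|y q IH] x z //=; rewrite inE => /orP[/eqP ->|zin].
  by rewrite !inE => /orP[->|->] //; rewrite orbT.
by move=> wz; move: (IH _ _ zin wz); rewrite !inE => ->; rewrite orbT.
Qed.

Lemma trail_of (x : T) (q : seq T) : path g x q -> x \notin q -> uniq q -> is_trail g (x :: q).
Proof.
rewrite /is_trail => -> /=.
elim: q x => [|y q IH] x //=; rewrite inE negb_or => /andP[xy xq] /andP[yq uq].
rewrite IH // andbT; apply/negP => H.
have := @pairmap_sub y q _ x H (set21 x y); rewrite inE.
by rewrite (negbTE xy) (negbTE xq).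
Qed.


Lemma count_trails s x y (L : seq (seq T)) : uniq L ->
  (forall q, q \in L -> size q = s /\ is_trail g (x :: q)) ->
  count (fun q => last x q == y) L <= num_trails g s x y.
Proof.
move=> uL HL.
pose f (q : seq T) : (s.+1).-tuple T := insubd (nseq_tuple s.+1 x) (x :: q).
rewrite -size_filter -(size_map f) /num_trails cardE.
apply: uniq_leq_size.
  rewrite map_inj_in_uniq ?filter_uniq //.
  move=> q r; rewrite !mem_filter => /andP[_ qL] /andP[_ rL] /(congr1 val).
  by rewrite !val_insubd /= (HL q qL).1 (HL r rL).1 eqxx => [[]].
move=> t /mapP [q]; rewrite mem_filter => /andP[/eqP ly qL] ->.
rewrite mem_enum inE.
have vt : val (f q) = x :: q by rewrite val_insubd /= (HL q qL).1 eqxx.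
rewrite (tnth_nth x) (tnth_nth x) vt (HL q qL).2 /= eqxx /=.
apply/eqP; rewrite -(HL q qL).1 -ly.
exact: (nth_last x (x :: q)).
Qed.

Lemma pigeon (B : {set T}) x (L : seq (seq T)) :
  (forall q, q \in L -> last x q \in B) ->
  exists y, size L <= #|B| * count (fun q => last x q == y) L.
Proof.
move=> HB.
have E : size L = \sum_(y in B) count (fun q => last x q == y) L.
  elim: L HB => [|q L IH] HB /=; first by rewrite big1.
  rewrite big_split /= -IH; last by move=> r rL; apply: HB; rewrite inE rL orbT.
  rewrite (big_setD1 (last x q)) ?HB ?mem_head // eqxx big1 //= => z.
  by rewrite !inE => /andP[zl _]; rewrite eq_sym (negbTE zl).
case: (set_0Vmem B) => [B0|[y0 y0B]].
  by exists x; rewrite E B0 big_set0.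
exists [arg max_(y > y0 in B) count (fun q => last x q == y) L].
case: arg_maxnP => // ym ymB Hm.
rewrite E -sum_nat_const; apply: leq_sum => y yB; exact: Hm.
Qed.

Lemma parity (A : {set T}) x q : bipartition g A -> path g x q ->
  (last x q \in A) = (x \in A) (+) odd (size q).
Proof.
move=> bip; elim: q x => [|y q IH] x /=; first by rewrite addbF.
move=> /andP[gxy pq]; rewrite IH //; move: (bip _ _ gxy).
by case: (x \in A); case: (y \in A); case: (odd (size q)).
Qed.

End Comb.
Arguments Psum {T}.
Arguments deg {T}.
Arguments ext {T}.
Arguments P_D1 {T g}.
Arguments edges_le {T}.
Arguments ext_size {T g}.
Arguments ext_uniq {T}.
Arguments ext_mem {T g}.
Arguments trail_of {T g}.
Arguments count_trails {T g}.
Arguments parity {T g}.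

Local Open Scope R_scope.

Lemma bern (t : R) (n : nat) : 0 <= t <= 1 -> 1 - INR n * t <= (1 - t) ^ n.
Proof.
move=> ht; elim: n => [|n IH]; first by simpl; lra.
rewrite S_INR /=.
have h0 : 0 <= INR n by apply: pos_INR.
nra.
Qed.

Lemma fin (D w d num N : R) (s : nat) : (2 <= s)%nat -> 9*PI*INR s/4 < D -> 1 <= w ->
  w ^ s = N -> D^2*w < d -> (d - INR s - 1)^s <= N * num -> D^(2*s) / 4 < num.
Proof.
move=> s2 hD hw hN hd hnum.
have hs : 2 <= INR s by apply: (le_INR 2); apply/leP.
have hPI : 3 < PI by have := PI2_3_2; lra.
have hD2 : 27 * INR s / 4 < D by nra.
have Dpos : 0 < D by lra.
have hss : 2 * INR s * (INR s + 1) <= D^2 by nra.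
set y := D^2 - INR s - 1.
have ypos : 0 <= y by rewrite /y; nra.
have h1 : y * w <= d - INR s - 1 by rewrite /y; nra.
have h2 : (y * w)^s <= (d - INR s - 1)^s by apply: pow_incr; nra.
have D2pos : 0 < D^2 by nra.
set t := (INR s + 1) / D^2.
have htD : t * D^2 = INR s + 1 by rewrite /t; field; nra.
have ht : 0 <= t <= 1 by nra.
have hy : y = D^2 * (1 - t) by rewrite /y; nra.
have hb := @bern t s ht.

have hst : INR s * t <= 1/2 by nra.
have Npos : 1 <= N by rewrite -hN; apply: pow_R1_Rle.
have hP : 0 < D^(2*s) by apply: pow_lt.
have e1 : (y * w)^s = D^(2*s) * (1-t)^s * N.
  have E : D^(2*s) = D^s * D^s by rewrite -pow_add; congr (_ ^ _); lia.
  rewrite -hN hy !Rpow_mult_distr pow1 Rmult_1_r E; ring.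
have e2 : D^(2*s) * (1/2) * N <= D^(2*s) * (1-t)^s * N.
  apply: Rmult_le_compat_r; first lra.
  apply: Rmult_le_compat_l; lra.
nra.
Qed.

Section Real.
Local Open Scope R_scope.
Variables (T : finType) (g : rel T).
Hypothesis gsym : symmetric g.
Hypothesis girr : irreflexive g.

Lemma prune (c : R) (S : {set T}) : c * INR #|S| < INR (Psum g S) ->
  exists (S' : {set T}) d x, x \in S' /\ c < 2 * INR d /\ forall u, u \in S' -> (d <= deg g S' u)%N.
Proof.
have [n] := ubnP #|S|; elim: n S => // n IH S; rewrite ltnS => leS HS.
destruct (classic (exists u, u \in S /\ INR (2 * deg g S u) <= c)) as [[u [uS Hu]]|Hn].
  have cS := cardsD1 u S; rewrite uS in cS.
  apply: (IH (S :\ u)); first by move: leS; rewrite cS; lia.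
  have cR : INR #|S| = INR #|S :\ u| + 1 by rewrite cS (_ : (true + #|S :\ u|)%N = (#|S :\ u| + 1)%N) ?plus_INR //; lia.
  move: HS; rewrite cR (P_D1 gsym girr S u uS) plus_INR mult_INR => HS.
  rewrite mult_INR in Hu.
  have h2 : INR 2 = 2 by [].
  rewrite h2 in HS Hu; nra.
case: (set_0Vmem S) => [S0|[x0 x0S]].
  by move: HS; rewrite S0 cards0 /Psum big_set0 /=; lra.
case: (@arg_minnP _ x0 (mem S) (deg g S) x0S) => m mS Hm.
exists S, (deg g S m), m; split => //; split => //.
apply: Rnot_le_lt => H; apply: Hn; exists m; split => //.
by rewrite mult_INR.
Qed.

End Real.

Local Open Scope R_scope.

Lemma Dbig (D w : R) (s : nat) : (2 <= s)%nat -> 9*PI*INR s/4 < D -> 1 <= w ->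
  INR s + 1 < D^2 * w.
Proof.
move=> s2 hD hw.
have hs : 2 <= INR s by apply: (le_INR 2); apply/leP.
have hPI : 3 < PI by have := PI2_3_2; lra.
have hD2 : 27 * INR s / 4 < D by nra.
nra.
Qed.

Lemma INR_expn (m n : nat) : INR (m ^ n)%N = INR m ^ n.
Proof. elim: n => [|n IH] //=; by rewrite expnS mult_INR IH. Qed.

Lemma nat_to_real (d s M k : nat) : INR s + 1 < INR d ->
  ((d - (1+s))^s <= M * k)%N -> (INR d - INR s - 1)^s <= INR M * INR k.
Proof.
move=> h hn.
have hle : (1 + s <= d)%N.
  apply/leP; apply: INR_le; rewrite plus_INR /=; lra.
move/leP: hn => hn; have := le_INR _ _ hn.
rewrite INR_expn mult_INR minus_INR; last by apply/leP.
have -> : INR (1 + s) = INR s + 1 by rewrite (plus_INR 1 s) /=; lra.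
have -> : INR d - (INR s + 1) = INR d - INR s - 1 by ring.
done.
Qed.

Lemma Rpower_s (v : R) (s : nat) : 0 < v -> (0 < s)%N ->
  Rpower v (1 / INR s) ^ s = v.
Proof.
move=> vp sp.
have sR : 0 < INR s by apply: lt_0_INR; apply/ltP.
rewrite -Rpower_pow; last by rewrite /Rpower; apply: exp_pos.
rewrite Rpower_mult.
replace (1 / INR s * INR s) with 1 by (field; lra).
by rewrite Rpower_1.
Qed.

Lemma Rpower_ge1 (v c : R) : 1 <= v -> 0 <= c -> 1 <= Rpower v c.
Proof.
move=> hv hc.
have := Rle_Rpower_l 1 v c hc (conj Rlt_0_1 hv).
by rewrite /Rpower ln_1 Rmult_0_r exp_0.
Qed.

Theorem theorem5p3 (T : finType) (g : rel T) (s : nat) :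
  simple_graph g -> (0 < #|T|)%N -> (2 <= s)%N ->
  (* (i) *)
  (forall D : R,
     D > 9 * PI * INR s / 4 ->
     INR (num_edges g) > 8 * D ^ 2 * Rpower (INR #|T|) (1 + 1 / INR s) ->
     exists x y : T, INR (num_trails g s x y) > D ^ (2 * s)%N / 4)
  /\
  (* (ii) *)
  (forall (A : {set T}) (D : R),
     bipartition g A ->
     D > 9 * PI * INR s / 4 ->
     INR (num_edges g) >
        4 * D ^ 2 * Rpower (INR (minn #|A| #|~: A|)) (1 / INR s)
          * INR (maxn #|A| #|~: A|) ->
     exists x y : T, INR (num_trails g s x y) > D ^ (2 * s)%N / 4).
Proof.
move=> [gsym girr] Tpos s2.
have s0 : (0 < s)%N by apply: leq_trans s2.
have sR : 0 < INR s by apply: lt_0_INR; apply/ltP.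
have eP : INR (num_edges g) <= INR (Psum g setT).
  by apply: le_INR; apply/leP; apply: edges_le.
have Tc : #|[set: T]| = #|T| by rewrite cardsT.
have HLgen : forall (S' : {set T}) x q, q \in ext g S' s x [:: x] ->
    size q = s /\ is_trail g (x :: q).
  move=> S' x q /ext_mem [sq pq uq aq]; split => //.
  apply: trail_of => //; apply/negP => xq.
  by move/allP: aq => /(_ x xq); rewrite inE eqxx.
split.
- move=> D hD he.
  set v := INR #|T|.
  have vpos : 0 < v by apply: lt_0_INR; apply/ltP.
  set w := Rpower v (1 / INR s).
  have wpos : 0 < w by rewrite /w /Rpower; apply: exp_pos.
  have ws : w ^ s = v by apply: Rpower_s.
  have w1 : 1 <= w.
    apply: Rpower_ge1; last by apply: Rlt_le; apply: Rdiv_lt_0_compat; lra.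
    by rewrite /v; apply: (le_INR 1); apply/leP.
  have hvw : Rpower v (1 + 1 / INR s) = v * w by rewrite Rpower_plus Rpower_1.
  have hP : (8 * D^2 * w) * INR #|[set: T]| < INR (Psum g setT).
    rewrite Tc -/v; rewrite hvw in he; nra.
  have [S' [d [x [xS [hc hdeg]]]]] := @prune T g gsym girr _ _ hP.
  have hDb := Dbig _ _ _ s2 hD w1.
  have hd : D^2 * w < INR d by nra.
  set L := ext g S' s x [:: x].
  have [y hy] := @pigeon T [set: T] x L (fun q _ => in_setT (last x q)).
  have hcnt := @count_trails T g s x y L (ext_uniq g S' s x [:: x]) (HLgen S' x).
  have hsz := ext_size S' d hdeg s x [:: x] xS.
  have hn : ((d - (1 + s)) ^ s <= #|T| * num_trails g s x y)%N.
    apply: leq_trans hsz _; apply: leq_trans hy _; rewrite Tc.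
    by apply: leq_mul.
  have hlt : INR s + 1 < INR d by lra.
  have hR := nat_to_real _ _ _ _ hlt hn.
  exists x, y.
  exact: (fin _ _ _ _ _ _ s2 hD w1 ws hd hR).
- move=> A D bip hD he.
  set a := minn #|A| #|~: A|.
  set b := maxn #|A| #|~: A|.
  set B := if (#|A| < #|~: A|)%N then A else ~: A.
  have cB : #|B| = a by rewrite /B /a /minn; case: (_ < _)%N.
  have bipB : bipartition g B.
    rewrite /B; case: (_ < _)%N => //.
    by move=> x y gxy; rewrite !inE; move: (bip x y gxy); case: (x \in A); case: (y \in A).
  set w := Rpower (INR a) (1 / INR s).
  have wpos : 0 < w by rewrite /w /Rpower; apply: exp_pos.
  change (INR (num_edges g) > 4 * D^2 * w * INR b) in he.
  have hTb : (#|T| <= 2 * b)%N by have := cardsC A; rewrite /b; lia.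
  have hTbR : INR #|T| <= 2 * INR b.
    by move/leP: hTb => hTb; have := le_INR _ _ hTb; rewrite mult_INR.
  have hP : (2 * D^2 * w) * INR #|[set: T]| < INR (Psum g setT).
    rewrite Tc.
    have D2 : 0 <= D^2 by nra.
    have : (2 * D^2 * w) * INR #|T| <= 4 * D^2 * w * INR b.
      have : 0 <= 2 * D^2 * w by nra.
      nra.
    lra.
  have [S' [d [x0 [x0S [hc hdeg]]]]] := @prune T g gsym girr _ _ hP.
  have hd : D^2 * w < INR d by nra.
  have d1 : (0 < d)%N.
    apply/ltP; apply: INR_lt; rewrite /=.
    have hpi := PI_RGT_0.
    have : 0 < 9 * PI * INR s / 4 by apply: Rdiv_lt_0_compat; nra.
    move=> h9.
    have Dpos : 0 < D by lra.
    have : 0 < D^2 * w by apply: Rmult_lt_0_compat => //; nra.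
    lra.
  have : (0 < deg g S' x0)%N by apply: leq_trans d1 (hdeg x0 x0S).
  rewrite /deg card_gt0 => /set0Pn [x1]; rewrite inE => /andP[x1S gx01].
  have [x [xS xB]] : exists x, x \in S' /\ (x \in B) (+) odd s.
    case E: ((x0 \in B) (+) odd s); first by exists x0.
    exists x1; split => //; move: (bipB _ _ gx01) E.
    by case: (x0 \in B); case: (x1 \in B); case: (odd s).
  set L := ext g S' s x [:: x].
  have HB : forall q, q \in L -> last x q \in B.
    move=> q qL; have [sq pq _ _] := ext_mem S' s x [:: x] q qL.
    by rewrite (parity _ _ _ bipB pq) sq.
  have [y hy] := @pigeon T B x L HB.
  have hcnt := @count_trails T g s x y L (ext_uniq g S' s x [:: x]) (HLgen S' x).
  have hsz := ext_size S' d hdeg s x [:: x] xS.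
  have hn : ((d - (1 + s)) ^ s <= a * num_trails g s x y)%N.
    apply: leq_trans hsz _; apply: leq_trans hy _; rewrite cB.
    by apply: leq_mul.
  have w1 : 1 <= w.
    case: (Rlt_dec 0 (INR a)) => ha.
      apply: Rpower_ge1; last by apply: Rlt_le; apply: Rdiv_lt_0_compat; lra.
      have : (0 < a)%N by apply/ltP; apply: INR_lt.
      by move=> /leP h; apply: (le_INR 1).
    have a0 : INR a = 0 by have := pos_INR a; lra.
    rewrite /w a0 /Rpower /ln; case: Rlt_dec => h; first by case: (Rlt_irrefl _ h).
    rewrite Rmult_0_r exp_0; exact: Rle_refl.
  have hDb := Dbig _ _ _ s2 hD w1.
  have hlt : INR s + 1 < INR d by lra.
  have hds : (1 + s < d)%N.
    apply/ltP; apply: INR_lt; rewrite plus_INR /=; lra.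
  have apos : (0 < a)%N.
    have : (0 < (d - (1 + s)) ^ s)%N by rewrite expn_gt0 subn_gt0 hds.
    move=> h; have := leq_trans h hn; rewrite muln_gt0 => /andP[] //.
  have ws : w ^ s = INR a.
    apply: Rpower_s => //; apply: lt_0_INR; apply/ltP; exact: apos.
  have hR := nat_to_real _ _ _ _ hlt hn.
  exists x, y.
  exact: (fin _ _ _ _ _ _ s2 hD w1 ws hd hR).
Qed.
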